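(* Let $l\ge 1$ and $m\ge 1$ be integers and $E$ a real number. Define $\mathcal N := \sqrt{\sum_{k=-2^{l-1}+1}^{2^{l-1}} \left|\frac{\sin \frac{(k-E)\pi}{m}}{\frac{(k-E)\pi}{m}}\right|^{2m}}$ and $\delta := \sum_{\substack{k=-2^{l-1}+1,\dots,2^{l-1}\\ |k-E|>m}} \left|\frac{1}{\mathcal N}\left(\frac{\sin \frac{(k-E)\pi}{m}}{\frac{(k-E)\pi}{m}}\right)^m\right|^2 .$ Then $\delta = O(\exp(-m))$.
   Context: Here $\delta$ is the probability, in $m$-th B-spline boosted quantum phase estimation with $l$ ancilla qubits applied to an eigenstate with eigenphase $E$ (in units of the ancilla grid), of measuring an outcome $k$ outside the confidence interval $E\pm m$; the post-QPE ancilla amplitudes are $\frac{1}{\mathcal N}\left(\frac{\sin\frac{(k-E)\pi}{m}}{\frac{(k-E)\pi}{m}}\right)^m$ for $k\in\{-2^{l-1}+1,\dots,2^{l-1}\}$. *)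

(* Defs.v *)
From Stdlib Require Import Reals List.
Open Scope R_scope.

Definition sinc (y : R) : R :=
  if Req_EM_T y 0 then 1 else sin y / y.

(* The ancilla outcome indexed by j in {0,...,2^l - 1}:
   k = j - 2^(l-1) + 1 ranges over {-2^(l-1)+1, ..., 2^(l-1)}. *)
Definition kval (l j : nat) : R := INR j - 2 ^ (l - 1) + 1.

Definition amp (m : nat) (E k : R) : R := sinc ((k - E) * PI / INR m) ^ m.

Definition ksum (l : nat) (f : R -> R) : R :=
  fold_right Rplus 0 (map (fun j => f (kval l j)) (seq 0 (2 ^ l))).

Definition Nnorm (l m : nat) (E : R) : R :=
  sqrt (ksum l (fun k => Rabs (sinc ((k - E) * PI / INR m)) ^ (2 * m))).

Definition delta (l m : nat) (E : R) : R :=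
  ksum l (fun k => if Rlt_dec (INR m) (Rabs (k - E))
                   then Rabs (/ Nnorm l m E * amp m E k) ^ 2 else 0).

(* Main.v *)
Require Import Defs.
From Stdlib Require Import Reals Lra Lia List.
Open Scope R_scope.

Lemma sin_lb3 x : 0 <= x <= 2 -> x - x^3/6 <= sin x.
Proof.
  intros [H0 H1].
  assert (HP := PI2_3_2).
  destruct (SIN x H0) as [H _]; [lra|].
  assert (E : sin_lb x = x - x^3/6 + x^5/120 - x^7/5040).
  { unfold sin_lb, sin_approx, sin_term. simpl. field. }
  rewrite E in H.
  assert (x^5/120 - x^7/5040 >= 0).
  { assert (x^7 = x^5*(x*x)) by ring. rewrite H2.
    assert (0 <= x^5) by (apply pow_le; lra).
    assert (x*x <= 4) by nra. nra. }
  lra.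
Qed.

Lemma sinc_lb x : x^2 <= 4 -> 1 - x^2/6 <= sinc x.
Proof.
  intros Hx. unfold sinc. destruct (Req_EM_T x 0) as [->|Hn].
  - simpl. lra.
  - destruct (Rle_lt_dec 0 x).
    + assert (0 < x) by lra.
      assert (x <= 2) by nra.
      assert (Hs := sin_lb3 x (conj r H0)).
      set (q := sin x / x). assert (q * x = sin x) by (unfold q; field; lra).
      nra.
    + assert (-x <= 2) by nra.
      assert (Hs := sin_lb3 (-x) (conj (ltac:(lra) : 0 <= -x) H)).
      rewrite sin_neg in Hs.
      set (q := sin x / x). assert (q * x = sin x) by (unfold q; field; lra).
      nra.
Qed.

Lemma sinc_ub x : x <> 0 -> Rabs (sinc x) <= / Rabs x.
Proof.
  intros Hn. unfold sinc. destruct (Req_EM_T x 0) as [E|_]; [contradiction|].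
  unfold Rdiv. rewrite Rabs_mult, Rabs_inv.
  assert (Rabs (sin x) <= 1) by (apply Rabs_le; apply SIN_bound).
  assert (0 < / Rabs x) by (apply Rinv_0_lt_compat; apply Rabs_pos_lt; auto).
  nra.
Qed.

Lemma bernoulli n v : 0 <= v -> 1 + INR n * v <= (1 + v) ^ n.
Proof.
  intros Hv. induction n.
  - simpl. lra.
  - rewrite S_INR. simpl.
    assert (0 <= INR n) by apply pos_INR.
    assert (0 <= INR n * v * v) by (apply Rmult_le_pos; [apply Rmult_le_pos|]; lra).
    nra.
Qed.

Lemma exp_INR n : exp (INR n) = exp 1 ^ n.
Proof.
  induction n. simpl. apply exp_0.
  rewrite S_INR, exp_plus, IHn. simpl. ring.
Qed.

Lemma fold_le (G H : nat -> R) s : (forall j, G j <= H j) ->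
  fold_right Rplus 0 (map G s) <= fold_right Rplus 0 (map H s).
Proof. intros Hl. induction s; simpl. lra. specialize (Hl a). lra. Qed.

Lemma fold_nonneg (G : nat -> R) s : (forall j, 0 <= G j) ->
  0 <= fold_right Rplus 0 (map G s).
Proof. intros Hl. induction s; simpl. lra. specialize (Hl a). lra. Qed.

Lemma tele (h : R -> R) K n : forall s,
  fold_right Rplus 0 (map (fun j => K * (h (INR j) - h (INR j + 1))) (seq s n))
  = K * (h (INR s) - h (INR (s + n))).
Proof.
  induction n; intros s; simpl.
  - rewrite Nat.add_0_r. ring.
  - rewrite IHn. replace (s + S n)%nat with (S s + n)%nat by lia.
    rewrite S_INR. ring.
Qed.

Lemma lb_fold (G : nat -> R) (a E B : R) n : forall s, (1 <= n)%nat ->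
  INR s + a <= E + 1/2 -> E + 1/2 <= INR s + INR n + a ->
  (forall j, 0 <= G j) -> (forall j, Rabs (INR j + a - E) <= 1/2 -> B <= G j) ->
  B <= fold_right Rplus 0 (map G (seq s n)).
Proof.
  induction n; intros s Hn H1 H2 Hpos HB; [lia|]. simpl.
  assert (0 <= fold_right Rplus 0 (map G (seq (S s) n))) by (apply fold_nonneg; auto).
  destruct (Rle_dec (E + 1/2) (INR s + a + 1)).
  - assert (B <= G s). { apply HB. apply Rabs_le. lra. } lra.
  - assert (1 <= n)%nat.
    { destruct n; [|lia]. simpl in H2. lra. }
    assert (B <= fold_right Rplus 0 (map G (seq (S s) n))).
    { apply IHn; auto; rewrite S_INR; [lra|]. rewrite S_INR in H2. lra. }
    specialize (Hpos s). lra.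
Qed.
Definition psi (M s : R) : R :=
  if Rle_dec (M - 1/2) s then / (s - M + 1)
  else if Rle_dec s (- M + 1/2) then 4 - / (- s - M + 1) else 2.

Lemma psi_cases M s : 1 <= M ->
  (M - 1/2 <= s /\ psi M s = / (s - M + 1) /\ 0 < psi M s <= 2) \/
  (s <= - M + 1/2 /\ s < M - 1/2 /\ psi M s = 4 - / (- s - M + 1) /\ 2 <= psi M s <= 4) \/
  (- M + 1/2 < s < M - 1/2 /\ psi M s = 2).
Proof.
  intros HM. unfold psi.
  destruct (Rle_dec (M - 1/2) s).
  - left. split; [lra|split;[reflexivity|]].
    assert (1/2 <= s - M + 1) by lra.
    split. apply Rinv_0_lt_compat; lra.
    replace 2 with (/ (1/2)) by field. apply Rinv_le_contravar; lra.
  - destruct (Rle_dec s (- M + 1/2)).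
    + right; left. split; [lra|split;[lra|split;[reflexivity|]]].
      assert (1/2 <= - s - M + 1) by lra.
      assert (0 < / (- s - M + 1)) by (apply Rinv_0_lt_compat; lra).
      assert (/ (- s - M + 1) <= 2).
      { replace 2 with (/ (1/2)) by field. apply Rinv_le_contravar; lra. }
      lra.
    + right; right. split; [lra|reflexivity].
Qed.

Lemma psi_range M s : 1 <= M -> 0 <= psi M s <= 4.
Proof. intros HM. destruct (psi_cases M s HM) as [[? [? ?]]|[[? [? [? ?]]]|[? ?]]]; lra. Qed.

Lemma psi_mono M a b : 1 <= M -> a <= b -> psi M b <= psi M a.
Proof.
  intros HM Hab.
  destruct (psi_cases M a HM) as [[A1 [A2 A3]]|[[A1 [A1' [A2 A3]]]|[A1 A2]]];
  destruct (psi_cases M b HM) as [[B1 [B2 B3]]|[[B1 [B1' [B2 B3]]]|[B1 B2]]]; try lra.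
  - rewrite A2, B2. apply Rinv_le_contravar; lra.
  - rewrite A2, B2. assert (/ (- a - M + 1) <= / (- b - M + 1)) by (apply Rinv_le_contravar; lra). lra.
Qed.

Lemma psi_step M t : 1 <= M -> M < Rabs t ->
  / (1 + Rabs t - M) ^ 2 <= psi M (t - 1/2) - psi M (t + 1/2).
Proof.
  intros HM Ht. unfold Rabs in Ht |- *. destruct (Rcase_abs t).
  - destruct (psi_cases M (t - 1/2) HM) as [[A1 [A2 A3]]|[[A1 [A1' [A2 A3]]]|[A1 A2]]];
    destruct (psi_cases M (t + 1/2) HM) as [[B1 [B2 B3]]|[[B1 [B1' [B2 B3]]]|[B1 B2]]]; try lra.
    rewrite A2, B2. remember (- t - M) as a eqn:Ea.
    replace (- (t - 1/2) - M + 1) with (a + 3/2) by lra.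
    replace (- (t + 1/2) - M + 1) with (a + 1/2) by lra.
    replace (1 + - t - M) with (a + 1) by lra.
    assert (0 < a) by lra.
    replace (4 - / (a + 3 / 2) - (4 - / (a + 1 / 2))) with (/ ((a+1)^2 - 1/4)) by (field; repeat split; nra).
    apply Rinv_le_contravar; nra.
  - destruct (psi_cases M (t - 1/2) HM) as [[A1 [A2 A3]]|[[A1 [A1' [A2 A3]]]|[A1 A2]]];
    destruct (psi_cases M (t + 1/2) HM) as [[B1 [B2 B3]]|[[B1 [B1' [B2 B3]]]|[B1 B2]]]; try lra.
    rewrite A2, B2. remember (t - M) as a eqn:Ea.
    replace (t - 1/2 - M + 1) with (a + 1/2) by lra.
    replace (t + 1/2 - M + 1) with (a + 3/2) by lra.
    replace (1 + t - M) with (a + 1) by lra.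
    assert (0 < a) by lra.
    replace (/ (a + 1 / 2) - / (a + 3 / 2)) with (/ ((a+1)^2 - 1/4)) by (field; repeat split; nra).
    apply Rinv_le_contravar; nra.
Qed.

Lemma K_bound m : (1 <= m)%nat ->
  / (PI * (1 - PI^2/(24*INR m^2)))^(2*m) <= 3 * exp (- INR m).
Proof.
  intros Hm.
  assert (HP1 := PI2_3_2). assert (HP2 := PI_4).
  assert (HM : 1 <= INR m) by (apply (le_INR 1 m) in Hm; simpl in Hm; lra).
  set (M := INR m) in *.
  set (r := PI^2/(24*M^2)).
  assert (Hr : r * (24 * M^2) = PI^2) by (unfold r; field; lra).
  assert (HPP : PI^2 <= 16) by nra.
  assert (0 <= r) by (unfold r; apply Rmult_le_pos; [nra|]; left; apply Rinv_0_lt_compat; nra).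
  assert (HM2 : 1 <= M^2) by nra.
  assert (r <= 2/3) by nra.
  set (a := PI * (1 - r)).
  assert (Ha : 1 <= a) by (unfold a; nra).
  assert (He := exp_le_3). assert (Hep : 0 < exp 1) by apply exp_pos.
  rewrite pow_mult.
  destruct (Nat.eq_dec m 1) as [->|Hm2].
  - simpl. rewrite exp_Ropp. replace M with 1 by (unfold M; simpl; reflexivity).
    assert (/ (a * (a * 1) * 1) <= 1).
    { apply Rle_trans with (/1); [apply Rinv_le_contravar; nra | rewrite Rinv_1; lra]. }
    assert (1 <= 3 * / exp 1).
    { apply Rmult_le_reg_r with (exp 1); auto. rewrite Rmult_assoc, Rinv_l; lra. }
    lra.
  - assert (HM' : 2 <= M) by (unfold M; assert (H2m : (2 <= m)%nat) by lia; apply (le_INR 2 m) in H2m; simpl in H2m; lra).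
    assert (r <= 1/6) by nra.
    assert (exp 1 <= a^2) by (unfold a; nra).
    assert (exp M <= (a^2)^m).
    { unfold M. rewrite exp_INR. apply pow_incr. lra. }
    rewrite exp_Ropp.
    assert (/ (a^2)^m <= / exp M) by (apply Rinv_le_contravar; [apply exp_pos|lra]).
    assert (0 < / exp M) by (apply Rinv_0_lt_compat, exp_pos).
    lra.
Qed.

Lemma term_ub m t : (1 <= m)%nat -> INR m < Rabs t ->
  Rabs (sinc (t * PI / INR m)) ^ (2 * m) <=
  / PI ^ (2 * m) * / (1 + Rabs t - INR m) ^ 2.
Proof.
  intros Hm Ht.
  assert (HP1 := PI2_3_2).
  assert (HM : 1 <= INR m) by (apply (le_INR 1 m) in Hm; simpl in Hm; lra).
  set (M := INR m) in *. set (u := Rabs t) in *.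
  assert (Htn : t <> 0) by (intro E; unfold u in Ht; rewrite E, Rabs_R0 in Ht; lra).
  assert (Hx : t * PI / M <> 0).
  { unfold Rdiv. intro E. apply Rmult_integral in E. destruct E as [E|E].
    apply Rmult_integral in E; destruct E; lra.
    apply Rinv_neq_0_compat in E; lra. }
  assert (HAx : Rabs (t * PI / M) = u * PI / M).
  { unfold Rdiv. rewrite !Rabs_mult, Rabs_inv, (Rabs_right PI), (Rabs_right M) by lra. reflexivity. }
  apply Rle_trans with ((/ Rabs (t * PI / M)) ^ (2 * m)).
  { apply pow_incr. split; [apply Rabs_pos|]. apply sinc_ub; auto. }
  rewrite HAx.
  set (b := / (u / M)).
  replace (/ (u * PI / M)) with (/ PI * b) by (unfold b; field; repeat split; lra).
  rewrite Rpow_mult_distr, pow_inv.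
  apply Rmult_le_compat_l. { left. apply Rinv_0_lt_compat, pow_lt. lra. }
  rewrite Nat.mul_comm, pow_mult.
  assert (Hb : b ^ m <= / (1 + u - M)).
  { unfold b. rewrite pow_inv. apply Rinv_le_contravar; [lra|].
    replace (u / M) with (1 + (u/M - 1)) by ring.
    replace (1 + u - M) with (1 + INR m * (u/M - 1)) by (unfold M in *; field; lra).
    apply bernoulli.
    assert (1 <= u / M). { apply Rmult_le_reg_r with M; [lra|]. unfold Rdiv. rewrite Rmult_assoc, Rinv_l; lra. }
    lra. }
  assert (0 <= b ^ m). { apply pow_le. unfold b. left. apply Rinv_0_lt_compat. unfold Rdiv. apply Rmult_lt_0_compat; [lra|]. apply Rinv_0_lt_compat; lra. }
  rewrite <- pow_inv. apply pow_incr. lra.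
Qed.

Theorem lemma2 :
  exists C : R, 0 < C /\
    forall (l m : nat) (E : R),
      (1 <= l)%nat -> (1 <= m)%nat ->
      - 2 ^ (l - 1) + 1 <= E <= 2 ^ (l - 1) ->
      delta l m E <= C * exp (- INR m).
Proof.
  exists 12. split; [lra|].
  intros l m E Hl Hm HE.
  assert (HP1 := PI2_3_2). assert (HP2 := PI_4).
  assert (HM : 1 <= INR m) by (apply (le_INR 1 m) in Hm; simpl in Hm; lra).
  set (L := 1 - PI^2/(24*INR m^2)).
  assert (HL : 1/3 <= L).
  { unfold L. set (M := INR m) in *. set (r := PI^2/(24*M^2)).
    assert (Hr : r * (24 * M^2) = PI^2) by (unfold r; field; lra).
    assert (PI^2 <= 16) by nra. assert (1 <= M^2) by nra. nra. }
  set (D := ksum l (fun k => Rabs (sinc ((k - E) * PI / INR m)) ^ (2 * m))).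
  assert (HN : Nnorm l m E = sqrt D) by reflexivity.
  assert (Hc : 2 ^ l = 2 * 2 ^ (l - 1)).
  { replace l with (S (l - 1)) at 1 by lia. reflexivity. }
  assert (HD : L ^ (2 * m) <= D).
  { unfold D, ksum.
    apply (lb_fold _ (- 2 ^ (l - 1) + 1) E).
    - assert (2 ^ l <> 0)%nat by (apply Nat.pow_nonzero; lia).
      lia.
    - simpl. lra.
    - simpl. rewrite pow_INR. replace (INR 2) with 2 by (simpl; ring). rewrite Hc. lra.
    - intro j. apply pow_le, Rabs_pos.
    - intros j Hj. apply pow_incr. split; [lra|].
      unfold kval. replace (INR j - 2 ^ (l - 1) + 1) with (INR j + (- 2 ^ (l - 1) + 1)) by ring.
      set (t := INR j + (- 2 ^ (l - 1) + 1) - E) in *.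
      set (M := INR m) in *. set (x := t * PI / M).
      set (r := PI^2/M^2).
      assert (Hr : r * M^2 = PI^2) by (unfold r; field; lra).
      assert (Hx2 : x^2 = t^2 * r) by (unfold x, r; field; lra).
      assert (Ht2 : t^2 <= 1/4). { rewrite <- pow2_abs. assert (0 <= Rabs t) by apply Rabs_pos. nra. }
      assert (PI^2 <= 16) by nra. assert (1 <= M^2) by nra.
      assert (0 <= r) by nra.
      assert (r <= 16) by nra.
      assert (x^2 <= 4) by nra.
      apply Rle_trans with (sinc x); [|apply Rle_abs].
      apply Rle_trans with (1 - x^2/6); [|apply sinc_lb; auto].
      unfold L. fold M. replace (PI^2/(24*M^2)) with (r/24) by (unfold r; field; lra).
      nra. }
  assert (HLp : 0 < L ^ (2 * m)) by (apply pow_lt; lra).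
  assert (HDp : 0 < D) by lra.
  set (K := / (PI * L) ^ (2 * m)).
  assert (HK : K <= 3 * exp (- INR m)) by (apply K_bound; auto).
  assert (HK0 : 0 <= K) by (left; apply Rinv_0_lt_compat, pow_lt; nra).
  set (h := fun y => psi (INR m) (y - 2 ^ (l - 1) + 1 - E - 1/2)).
  apply Rle_trans with (fold_right Rplus 0
     (map (fun j => K * (h (INR j) - h (INR j + 1))) (seq 0 (2 ^ l)))).
  - unfold delta, ksum. apply fold_le. intro j.
    assert (Eh1 : h (INR j) = psi (INR m) ((kval l j - E) - 1/2)) by (unfold h, kval; cbv beta; apply f_equal; lra).
    assert (Eh2 : h (INR j + 1) = psi (INR m) ((kval l j - E) + 1/2)) by (unfold h, kval; cbv beta; apply f_equal; lra).
    rewrite Eh1, Eh2.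
    set (t := kval l j - E).
    destruct (Rlt_dec (INR m) (Rabs t)) as [Ht|Ht].
    + rewrite pow2_abs, HN. unfold amp. fold t.
      set (s := sinc (t * PI / INR m)).
      assert (Hs : (/ sqrt D * s ^ m) ^ 2 = / D * Rabs s ^ (2 * m)).
      { rewrite Rpow_mult_distr, pow_inv.
        replace (sqrt D ^ 2) with D by (simpl; rewrite Rmult_1_r, sqrt_sqrt; lra).
        f_equal. rewrite pow_mult, pow2_abs, <- pow_mult, <- pow_mult, Nat.mul_comm. reflexivity. }
      rewrite Hs.
      assert (HA := term_ub m t Hm Ht). fold s in HA.
      assert (HA0 : 0 <= Rabs s ^ (2 * m)) by (apply pow_le, Rabs_pos).
      apply Rle_trans with (/ L ^ (2 * m) * Rabs s ^ (2 * m)).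
      { apply Rmult_le_compat_r; auto. apply Rinv_le_contravar; auto. }
      apply Rle_trans with (/ L ^ (2 * m) * (/ PI ^ (2 * m) * / (1 + Rabs t - INR m) ^ 2)).
      { apply Rmult_le_compat_l; auto. left; apply Rinv_0_lt_compat; auto. }
      replace (/ L ^ (2 * m) * (/ PI ^ (2 * m) * / (1 + Rabs t - INR m) ^ 2))
        with (K * / (1 + Rabs t - INR m) ^ 2)
        by (unfold K; rewrite Rpow_mult_distr; field; repeat split; try apply pow_nonzero; nra).
      apply Rmult_le_compat_l; auto. apply psi_step; auto.
    + apply Rmult_le_pos; auto. assert (psi (INR m) (t + 1/2) <= psi (INR m) (t - 1/2)) by (apply psi_mono; lra). lra.
  - rewrite tele.
    assert (H1 := psi_range (INR m) (INR 0 - 2 ^ (l - 1) + 1 - E - 1 / 2) HM).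
    assert (H2 := psi_range (INR m) (INR (0 + 2^l) - 2 ^ (l - 1) + 1 - E - 1 / 2) HM).
    unfold h. nra.
Qed.
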